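(* On the open set $\Omega\subset\mathbb{R}^3$ where $u,v,w$ are pairwise distinct, consider the system $$u'=\frac{1}{u-v}+\frac{1}{u-w},\quad v'=\frac{1}{v-w}+\frac{1}{v-u},\quad w'=\frac{1}{w-u}+\frac{1}{w-v},$$ written $\mathbf{u}'=\mathbf{U}(\mathbf{u})$ with $\mathbf{u}=(u,v,w)$. Define $$P_{f1}(\mathbf{u})=\frac{-1}{\sqrt6\,(u-v)(v-w)(w-u)}\begin{pmatrix}0&1&-1\\-1&0&1\\1&-1&0\end{pmatrix},\qquad H_f(\mathbf{u})=\frac{1}{6\sqrt6}(u+v-2w)\big[(u+v-2w)^2-9(u-v)^2\big],$$ $$P_{f2}(\mathbf{u})=\frac16\Big[\frac{u-v}{(v-w)(w-u)}+\frac{2}{u-v}\Big]\begin{pmatrix}0&2&1\\-2&0&-1\\-1&1&0\end{pmatrix}+\frac12\Big[\frac1{v-w}-\frac1{w-u}\Big]\begin{pmatrix}0&0&1\\0&0&1\\-1&-1&0\end{pmatrix},$$ and $H^{(1)}(\mathbf{u})=u+v+w$. Then $P_{f1}$ and $P_{f2}$ are compatible Poisson matrices on $\Omega$, and the system is bi-Hamiltonian: $$\mathbf{u}'=P_{f1}(\mathbf{u})\nabla H_f(\mathbf{u})=P_{f2}(\mathbf{u})\nabla H^{(1)}(\mathbf{u}).$$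
   Context: A smooth skew-symmetric matrix-valued function $P$ on an open subset of $\mathbb{R}^3$ is a Poisson matrix if the bracket $\{f,g\}=(\nabla f)^{T}P\,\nabla g$ satisfies the Jacobi identity; two Poisson matrices are compatible if every linear combination of them is again a Poisson matrix. *)

(* Defs.v *)
From Stdlib Require Import Reals List.
From Coquelicot Require Import Coquelicot.
Open Scope R_scope.

Definition pt : Type := (R * R * R)%type.

Inductive ix : Type := X1 | X2 | X3.

Definition sum3 (F : ix -> R) : R := F X1 + F X2 + F X3.

Definition coord (i : ix) (p : pt) : R :=
  match i with X1 => fst (fst p) | X2 => snd (fst p) | X3 => snd p end.

Definition upd (i : ix) (p : pt) (t : R) : pt :=
  match i with
  | X1 => ((t, snd (fst p)), snd p)
  | X2 => ((fst (fst p), t), snd p)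
  | X3 => ((fst (fst p), snd (fst p)), t)
  end.

Definition pd (i : ix) (f : pt -> R) (p : pt) : R :=
  Derive (fun t => f (upd i p t)) (coord i p).

Definition iterD (s : list ix) (f : pt -> R) : pt -> R :=
  fold_right pd f s.

Definition smooth_on (U : pt -> Prop) (f : pt -> R) : Prop :=
  forall (s : list ix) (p : pt), U p ->
    continuous (iterD s f) p /\
    (forall i, ex_derive (fun t => iterD s f (upd i p t)) (coord i p)).

Definition mxfun : Type := pt -> ix -> ix -> R.

Definition bracket (P : mxfun) (f g : pt -> R) : pt -> R :=
  fun p => sum3 (fun i => sum3 (fun j => pd i f p * P p i j * pd j g p)).

Definition Poisson_on (U : pt -> Prop) (P : mxfun) : Prop :=
  (forall i j, smooth_on U (fun p => P p i j)) /\
  (forall p, U p -> forall i j, P p i j = - P p j i) /\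
  (forall f g h : pt -> R, smooth_on U f -> smooth_on U g -> smooth_on U h ->
     forall p, U p ->
       bracket P f (bracket P g h) p + bracket P g (bracket P h f) p
       + bracket P h (bracket P f g) p = 0).

Definition compatible_on (U : pt -> Prop) (P Q : mxfun) : Prop :=
  forall a b : R, Poisson_on U (fun p i j => a * P p i j + b * Q p i j).

Definition Omega (p : pt) : Prop :=
  let u := coord X1 p in let v := coord X2 p in let w := coord X3 p in
  u <> v /\ v <> w /\ w <> u.

Definition Ufield (p : pt) (i : ix) : R :=
  let u := coord X1 p in let v := coord X2 p in let w := coord X3 p in
  match i with
  | X1 => 1 / (u - v) + 1 / (u - w)
  | X2 => 1 / (v - w) + 1 / (v - u)
  | X3 => 1 / (w - u) + 1 / (w - v)
  end.

Definition M1 (i j : ix) : R :=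
  match i, j with
  | X1, X1 => 0 | X1, X2 => 1 | X1, X3 => -1
  | X2, X1 => -1 | X2, X2 => 0 | X2, X3 => 1
  | X3, X1 => 1 | X3, X2 => -1 | X3, X3 => 0
  end.

Definition M2 (i j : ix) : R :=
  match i, j with
  | X1, X1 => 0 | X1, X2 => 2 | X1, X3 => 1
  | X2, X1 => -2 | X2, X2 => 0 | X2, X3 => -1
  | X3, X1 => -1 | X3, X2 => 1 | X3, X3 => 0
  end.

Definition M3 (i j : ix) : R :=
  match i, j with
  | X1, X1 => 0 | X1, X2 => 0 | X1, X3 => 1
  | X2, X1 => 0 | X2, X2 => 0 | X2, X3 => 1
  | X3, X1 => -1 | X3, X2 => -1 | X3, X3 => 0
  end.

Definition Pf1 : mxfun := fun p i j =>
  let u := coord X1 p in let v := coord X2 p in let w := coord X3 p in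
  (-1 / (sqrt 6 * (u - v) * (v - w) * (w - u))) * M1 i j.

Definition Pf2 : mxfun := fun p i j =>
  let u := coord X1 p in let v := coord X2 p in let w := coord X3 p in
  (1 / 6) * ((u - v) / ((v - w) * (w - u)) + 2 / (u - v)) * M2 i j
  + (1 / 2) * (1 / (v - w) - 1 / (w - u)) * M3 i j.

Definition Hf (p : pt) : R :=
  let u := coord X1 p in let v := coord X2 p in let w := coord X3 p in
  1 / (6 * sqrt 6) * (u + v - 2 * w) * ((u + v - 2 * w) ^ 2 - 9 * (u - v) ^ 2).

Definition H1 (p : pt) : R := coord X1 p + coord X2 p + coord X3 p.

Definition PgradH (P : mxfun) (H : pt -> R) (p : pt) (i : ix) : R :=
  sum3 (fun j => P p i j * pd j H p).

(* Main.v *)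
Require Import Defs.
From Stdlib Require Import Reals Lra List FunctionalExtensionality.
From Coquelicot Require Import Coquelicot.
Open Scope R_scope.

Lemma ballR (x e y : R) : ball x e y <-> Rabs (y - x) < e.
Proof. unfold ball; simpl; unfold AbsRing_ball, abs, minus, plus, opp; simpl. tauto. Qed.

Lemma ball_pt (p q : pt) (e : R) : ball p e q <->
  Rabs (coord X1 q - coord X1 p) < e /\ Rabs (coord X2 q - coord X2 p) < e /\
  Rabs (coord X3 q - coord X3 p) < e.
Proof.
  destruct p as [[u v] w], q as [[a b] c]. simpl.
  change (((ball u e a /\ ball v e b)) /\ ball w e c <-> Rabs (a - u) < e /\ Rabs (b - v) < e /\ Rabs (c - w) < e). rewrite !ballR; tauto.
Qed.

Lemma Omega_ball (p : pt) : Omega p -> exists d : posreal,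
  forall q : pt, Rabs (coord X1 q - coord X1 p) < d -> Rabs (coord X2 q - coord X2 p) < d ->
   Rabs (coord X3 q - coord X3 p) < d -> Omega q.
Proof.
  destruct p as [[u v] w]; unfold Omega; simpl; intros [H1 [H2 H3]].
  assert (Hd : 0 < Rmin (Rabs (u - v)) (Rmin (Rabs (v - w)) (Rabs (w - u))) / 2).
  { apply Rdiv_lt_0_compat; [|lra].
    repeat apply Rmin_glb_lt; apply Rabs_pos_lt; lra. }
  exists (mkposreal _ Hd); simpl.
  pose proof (Rmin_l (Rabs (u - v)) (Rmin (Rabs (v - w)) (Rabs (w - u)))).
  pose proof (Rmin_r (Rabs (u - v)) (Rmin (Rabs (v - w)) (Rabs (w - u)))).
  pose proof (Rmin_l (Rabs (v - w)) (Rabs (w - u))).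
  pose proof (Rmin_r (Rabs (v - w)) (Rabs (w - u))).
  set (m := Rmin (Rabs (u - v)) (Rmin (Rabs (v - w)) (Rabs (w - u)))) in *.
  set (m2 := Rmin (Rabs (v - w)) (Rabs (w - u))) in *.
  intros [[a b] c]; simpl; intros Ha Hb Hc.
  revert Ha Hb Hc H H0 H4 H5; unfold Rabs; repeat destruct Rcase_abs; intros; repeat split; intro E; lra.
Qed.

Lemma Omega_locally (p : pt) : Omega p -> locally p Omega.
Proof.
  intros Hp; destruct (Omega_ball p Hp) as [d Hd]; exists d; intros q Hq.
  apply ball_pt in Hq; destruct Hq as [? [? ?]]; apply Hd; auto.
Qed.

Lemma coord_upd_same i p t : coord i (upd i p t) = t.
Proof. destruct i, p as [[u v] w]; reflexivity. Qed.

Lemma coord_upd_other i j p t : i <> j -> coord j (upd i p t) = coord j p.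
Proof. destruct i, j, p as [[u v] w]; simpl; intros; try reflexivity; congruence. Qed.

Lemma Omega_line (p : pt) i : Omega p -> locally (coord i p) (fun t => Omega (upd i p t)).
Proof.
  intros Hp; destruct (Omega_ball p Hp) as [d Hd]; exists d; intros t Ht.
  apply ballR in Ht. apply Hd;
  destruct i, p as [[u v] w]; simpl in *; rewrite ?Rminus_diag, ?Rabs_R0; auto; apply cond_pos.
Qed.

Inductive pr := Q12 | Q23 | Q31.
Definition pa (q : pr) : ix := match q with Q12 => X1 | Q23 => X2 | Q31 => X3 end.
Definition pb (q : pr) : ix := match q with Q12 => X2 | Q23 => X3 | Q31 => X1 end.
Inductive ex := Cst (c : R) | Var (i : ix) | Add (a b : ex) | Mul (a b : ex) | Inv (q : pr).
Fixpoint ev (e : ex) (p : pt) : R :=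
  match e with
  | Cst c => c
  | Var i => coord i p
  | Add a b => ev a p + ev b p
  | Mul a b => ev a p * ev b p
  | Inv q => / (coord (pa q) p - coord (pb q) p)
  end.
Definition dl (i k : ix) : R :=
  match i, k with X1, X1 | X2, X2 | X3, X3 => 1 | _, _ => 0 end.
Fixpoint D (k : ix) (e : ex) : ex :=
  match e with
  | Cst _ => Cst 0
  | Var i => Cst (dl i k)
  | Add a b => Add (D k a) (D k b)
  | Mul a b => Add (Mul (D k a) b) (Mul a (D k b))
  | Inv q => Mul (Cst (- (dl (pa q) k - dl (pb q) k))) (Mul (Inv q) (Inv q))
  end.

Lemma isd_val (f : R -> R) (x l l' : R) : is_derive f x l -> l = l' -> is_derive f x l'.
Proof. intros H ->; exact H. Qed.
Lemma isd_plus (f g : R -> R) (x df dg : R) : is_derive f x df -> is_derive g x dg ->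
  is_derive (fun t => f t + g t) x (df + dg).
Proof. intros; apply (is_derive_plus f g); auto. Qed.
Lemma isd_minus (f g : R -> R) (x df dg : R) : is_derive f x df -> is_derive g x dg ->
  is_derive (fun t => f t - g t) x (df - dg).
Proof. intros; apply (is_derive_minus f g); auto. Qed.
Lemma isd_mult (f g : R -> R) (x df dg : R) : is_derive f x df -> is_derive g x dg ->
  is_derive (fun t => f t * g t) x (df * g x + f x * dg).
Proof. intros; apply (is_derive_mult f g); auto. intros; apply Rmult_comm. Qed.

Lemma isd_id (x : R) : is_derive (fun t : R => t) x 1.
Proof. exact (is_derive_id (K:=R_AbsRing) x). Qed.
Lemma isd_const (c x : R) : is_derive (fun _ : R => c) x 0.
Proof. exact (is_derive_const (K:=R_AbsRing) (V:=R_NormedModule) c x). Qed.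
Lemma upd_coord k p : upd k p (coord k p) = p.
Proof. destruct k, p as [[u v] w]; reflexivity. Qed.

Lemma isd_coord i k p : is_derive (fun t => coord i (upd k p t)) (coord k p) (dl i k).
Proof.
  destruct i, k, p as [[u v] w]; simpl;
  first [ apply isd_id | apply isd_const ].
Qed.

Lemma Omega_pr p q : Omega p -> coord (pa q) p - coord (pb q) p <> 0.
Proof. destruct p as [[u v] w]; unfold Omega; simpl; intros [? [? ?]]; destruct q; simpl; lra. Qed.

Lemma ev_deriv e k p : Omega p ->
  is_derive (fun t => ev e (upd k p t)) (coord k p) (ev (D k e) p).
Proof.
  intros Hp; induction e; simpl.
  - apply isd_const.
  - apply isd_coord.
  - apply isd_plus; auto.
  - eapply isd_val; [apply isd_mult; eauto|].
    cbv beta; rewrite upd_coord; reflexivity.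
  - eapply isd_val; [apply is_derive_inv; [apply isd_minus; apply isd_coord|] |].
    + cbv beta; rewrite upd_coord; apply Omega_pr; auto.
    + cbv beta; rewrite upd_coord; pose proof (Omega_pr p q Hp); field; auto.
Qed.

Lemma coord_cont i (p : pt) : continuous (coord i) p.
Proof.
  destruct p as [[u v] w], i; unfold coord.
  - apply (continuous_comp (fun p : pt => fst p) fst). apply continuous_fst. apply continuous_fst.
  - apply (continuous_comp (fun p : pt => fst p) snd). apply continuous_fst. apply continuous_snd.
  - apply continuous_snd.
Qed.

Lemma ev_cont e p : Omega p -> continuous (ev e) p.
Proof.
  intros Hp; induction e; simpl.
  - apply continuous_const.
  - apply coord_cont.
  - apply (continuous_plus (ev e1) (ev e2)); auto.
  - apply (continuous_mult (ev e1) (ev e2)); auto.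
  - apply (continuous_comp (fun p => coord (pa q) p - coord (pb q) p) Rinv).
    2: apply continuous_Rinv, Omega_pr; auto.
    apply (continuous_minus (coord (pa q)) (coord (pb q))); apply coord_cont.
Qed.

Definition Ds (s : list ix) (e : ex) : ex := fold_right D e s.

Lemma iter_ev (F : pt -> R) e : (forall q, Omega q -> F q = ev e q) ->
  forall s q, Omega q -> iterD s F q = ev (Ds s e) q.
Proof.
  intros HF s; induction s as [|i s IH]; intros q Hq; simpl; auto.
  unfold pd. rewrite (Derive_ext_loc _ (fun t => ev (Ds s e) (upd i q t))).
  - apply is_derive_unique; apply ev_deriv; auto.
  - generalize (Omega_line q i Hq); apply filter_imp; intros t Ht; auto.
Qed.

Lemma smooth_ev (F : pt -> R) e : (forall q, Omega q -> F q = ev e q) -> smooth_on Omega F.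
Proof.
  intros HF s p Hp; split.
  - apply (continuous_ext_loc (iterD s F) (ev (Ds s e)) p).
    + generalize (Omega_locally p Hp); apply filter_imp; intros q Hq.
      symmetry; apply iter_ev; auto.
    + apply ev_cont; auto.
  - intros i. apply (ex_derive_ext_loc (fun t => ev (Ds s e) (upd i p t))).
    + generalize (Omega_line p i Hp); apply filter_imp; intros t Ht.
      symmetry; apply iter_ev; auto.
    + eexists; apply ev_deriv; auto.
Qed.

Lemma updA i j q a b : i <> j -> upd i (upd j q b) a = upd j (upd i q a) b.
Proof. destruct i, j, q as [[u v] w]; simpl; intros; try reflexivity; congruence. Qed.
Lemma updB i q a b : upd i (upd i q a) b = upd i q b.
Proof. destruct i, q as [[u v] w]; reflexivity. Qed.

Lemma ball_2d (e : posreal) p i j u v : i <> j ->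
  Rabs (u - coord i p) < e -> Rabs (v - coord j p) < e -> ball p e (upd j (upd i p u) v).
Proof.
  intros Hij Hu Hv; apply ball_pt.
  pose proof (cond_pos e).
  destruct i, j; try congruence; destruct p as [[a b] c]; simpl in *;
  rewrite ?Rminus_diag, ?Rabs_R0; auto.
Qed.

Lemma cont2d (g : pt -> R) p i j : i <> j -> continuous g p ->
  continuity_2d_pt (fun u v => g (upd j (upd i p u) v)) (coord i p) (coord j p).
Proof.
  intros Hij Hg eps.
  assert (H : locally p (fun q => ball (g p) eps (g q))).
  { apply Hg. apply locally_ball. }
  destruct H as [d Hd]. exists d; intros u v Hu Hv.
  rewrite upd_coord, upd_coord.
  apply ballR, Hd, ball_2d; auto.
Qed.

Lemma ix_eq_dec (i j : ix) : {i = j} + {i <> j}.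
Proof. decide equality. Defined.

Lemma schwarz3 (f : pt -> R) p i j : smooth_on Omega f -> Omega p ->
  pd i (pd j f) p = pd j (pd i f) p.
Proof.
  intros Hf Hp. destruct (ix_eq_dec i j) as [->|Hij]; [reflexivity|].
  assert (Hji : j <> i) by congruence.
  set (F2 := fun a b => f (upd j (upd i p a) b)).
  transitivity (Derive (fun z => Derive (fun t => F2 z t) (coord j p)) (coord i p)).
  { unfold pd; apply Derive_ext; intros z; rewrite coord_upd_other; auto. }
  transitivity (Derive (fun t => Derive (fun z => F2 z t) (coord i p)) (coord j p)).
  2:{ unfold pd; apply Derive_ext; intros t; rewrite coord_upd_other; auto.
      apply Derive_ext; intros z; unfold F2; rewrite updA; auto. }
  apply Schwarz.
  - destruct (Omega_locally p Hp) as [d Hd]. exists d; intros u v Hu Hv.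
    set (q := upd j (upd i p u) v).
    assert (Hq : Omega q) by (apply Hd, ball_2d; auto).
    assert (Cu : coord i q = u) by (unfold q; rewrite coord_upd_other, coord_upd_same; auto).
    assert (Cv : coord j q = v) by (unfold q; rewrite coord_upd_same; auto).
    destruct (Hf nil q Hq) as [_ H0].
    destruct (Hf (j :: nil) q Hq) as [_ H1].
    destruct (Hf (i :: nil) q Hq) as [_ H2].
    simpl in H0, H1, H2.
    specialize (H0 i) as H0i. specialize (H0 j) as H0j. specialize (H1 i). specialize (H2 j).
    rewrite Cu in H0i, H1. rewrite Cv in H0j, H2.
    repeat split.
    + eapply ex_derive_ext; [|exact H0i]; intros z; simpl; unfold F2, q.
      rewrite updA, updB; auto.
    + eapply ex_derive_ext; [|exact H0j]; intros z; simpl; unfold F2, q.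
      rewrite updB; auto.
    + eapply ex_derive_ext; [|exact H1]; intros z; simpl; unfold F2, q, pd.
      rewrite updA, updB, coord_upd_same by auto.
      apply Derive_ext; intros t; rewrite updB; auto.
    + eapply ex_derive_ext; [|exact H2]; intros z; simpl; unfold F2, q, pd.
      rewrite updB, coord_upd_other, coord_upd_same by auto.
      apply Derive_ext; intros t; rewrite updA, updB; auto.
  - destruct (Hf (i :: j :: nil) p Hp) as [Hc _]; simpl in Hc.
    generalize (cont2d _ p i j Hij Hc); apply continuity_2d_pt_ext.
    intros u v; unfold F2, pd.
    rewrite coord_upd_other, coord_upd_same by auto.
    apply Derive_ext; intros z. rewrite updA, updB, coord_upd_same by auto.
    apply Derive_ext; intros t. rewrite updB; auto.
  - destruct (Hf (j :: i :: nil) p Hp) as [Hc _]; simpl in Hc.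
    generalize (cont2d _ p i j Hij Hc); apply continuity_2d_pt_ext.
    intros u v; unfold F2, pd.
    rewrite coord_upd_same by auto.
    apply Derive_ext; intros z. rewrite updB, coord_upd_other, coord_upd_same by auto.
    apply Derive_ext; intros t. rewrite updA, updB; auto.
Qed.

Lemma smooth_pd F k : smooth_on Omega F -> smooth_on Omega (pd k F).
Proof.
  intros HF s p Hp. 
  assert (E : iterD s (pd k F) = iterD (s ++ k :: nil) F).
  { unfold iterD; rewrite fold_right_app; reflexivity. }
  rewrite E; apply HF; auto.
Qed.

Lemma isd_pd F j p : smooth_on Omega F -> Omega p ->
  is_derive (fun t => F (upd j p t)) (coord j p) (pd j F p).
Proof. intros HF Hp; apply Derive_correct; exact (proj2 (HF nil p Hp) j). Qed.

Lemma isd_sum3 (F : ix -> R -> R) (dF : ix -> R) x :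
  (forall k, is_derive (F k) x (dF k)) -> is_derive (fun t => sum3 (fun k => F k t)) x (sum3 dF).
Proof. intros H; unfold sum3; repeat apply isd_plus; auto. Qed.

Lemma isd_mult3 (a b c : R -> R) x da db dc : is_derive a x da -> is_derive b x db -> is_derive c x dc ->
  is_derive (fun t => a t * b t * c t) x (da * b x * c x + a x * db * c x + a x * b x * dc).
Proof.
  intros Ha Hb Hc.
  apply isd_val with (l := (da * b x + a x * db) * c x + (a x * b x) * dc); [|ring].
  apply (isd_mult (fun t => a t * b t) c); auto. apply isd_mult; auto.
Qed.

Lemma pd_bracket (P : mxfun) g h p j : smooth_on Omega g -> smooth_on Omega h ->
  (forall k l, smooth_on Omega (fun q => P q k l)) -> Omega p ->
  pd j (bracket P g h) p = sum3 (fun k => sum3 (fun l =>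
     pd j (pd k g) p * P p k l * pd l h p + pd k g p * pd j (fun q => P q k l) p * pd l h p
     + pd k g p * P p k l * pd j (pd l h) p)).
Proof.
  intros Hg Hh HP Hp. unfold pd at 1. apply is_derive_unique. unfold bracket.
  apply (isd_sum3 (fun k t => sum3 (fun l => pd k g (upd j p t) * P (upd j p t) k l * pd l h (upd j p t)))).
  intros k.
  apply (isd_sum3 (fun l t => pd k g (upd j p t) * P (upd j p t) k l * pd l h (upd j p t))).
  intros l. eapply isd_val.
  - apply (isd_mult3 (fun t => pd k g (upd j p t)) (fun t => P (upd j p t) k l) (fun t => pd l h (upd j p t))).
    + apply isd_pd; auto; apply smooth_pd; auto.
    + apply (isd_pd (fun q => P q k l)); auto.
    + apply isd_pd; auto; apply smooth_pd; auto.
  - rewrite upd_coord; reflexivity.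
Qed.

Definition Tc (P : mxfun) p i j k := sum3 (fun l =>
  P p i l * pd l (fun q => P q j k) p + P p j l * pd l (fun q => P q k i) p
  + P p k l * pd l (fun q => P q i j) p).

Lemma jacobi_generic (P : mxfun) :
  (forall i j, smooth_on Omega (fun p => P p i j)) ->
  (forall p, Omega p -> forall i j, P p i j = - P p j i) ->
  (forall p, Omega p -> forall i j k, Tc P p i j k = 0) ->
  Poisson_on Omega P.
Proof.
  intros HP Hsk HT. split; [|split]; auto.
  intros f g h Hf Hg Hh p Hp.
  transitivity (sum3 (fun i => sum3 (fun j => sum3 (fun k =>
     pd i f p * pd j g p * pd k h p * Tc P p i j k)))).
  2:{ unfold sum3; rewrite !(HT p Hp); ring. }
  unfold bracket at 1 3 5.
  cbv beta; unfold sum3.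
  rewrite !(fun j => pd_bracket P g h p j Hg Hh HP Hp).
  rewrite !(fun j => pd_bracket P h f p j Hh Hf HP Hp).
  rewrite !(fun j => pd_bracket P f g p j Hf Hg HP Hp).
  unfold Tc, sum3.
  rewrite (schwarz3 f p X2 X1 Hf Hp), (schwarz3 f p X3 X1 Hf Hp), (schwarz3 f p X3 X2 Hf Hp).
  rewrite (schwarz3 g p X2 X1 Hg Hp), (schwarz3 g p X3 X1 Hg Hp), (schwarz3 g p X3 X2 Hg Hp).
  rewrite (schwarz3 h p X2 X1 Hh Hp), (schwarz3 h p X3 X1 Hh Hp), (schwarz3 h p X3 X2 Hh Hp).
  assert (D1 : P p X1 X1 = 0) by (pose proof (Hsk p Hp X1 X1); lra).
  assert (D2 : P p X2 X2 = 0) by (pose proof (Hsk p Hp X2 X2); lra).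
  assert (D3 : P p X3 X3 = 0) by (pose proof (Hsk p Hp X3 X3); lra).
  rewrite (Hsk p Hp X2 X1), (Hsk p Hp X3 X1), (Hsk p Hp X3 X2), D1, D2, D3.
  ring.
Qed.

Lemma pd_ev F e l p : (forall q, Omega q -> F q = ev e q) -> Omega p -> pd l F p = ev (D l e) p.
Proof. intros H Hp; exact (iter_ev F e H (l :: nil) p Hp). Qed.

Definition e1 i j := Mul (Cst (-1 / sqrt 6 * M1 i j)) (Mul (Inv Q12) (Mul (Inv Q23) (Inv Q31))).
Definition e2 i j :=
  Add (Mul (Cst (1/6 * M2 i j)) (Add (Mul (Add (Var X1) (Mul (Cst (-1)) (Var X2))) (Mul (Inv Q23) (Inv Q31)))
                                      (Mul (Cst 2) (Inv Q12))))
      (Mul (Cst (1/2 * M3 i j)) (Add (Inv Q23) (Mul (Cst (-1)) (Inv Q31)))).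
Definition ecomb a b i j := Add (Mul (Cst a) (e1 i j)) (Mul (Cst b) (e2 i j)).

Definition Pc (a b : R) : mxfun := fun p i j => a * Pf1 p i j + b * Pf2 p i j.

Lemma sqrt6_nz : sqrt 6 <> 0.
Proof. apply Rgt_not_eq, sqrt_lt_R0; lra. Qed.

Lemma Pc_ev a b i j : forall q, Omega q -> Pc a b q i j = ev (ecomb a b i j) q.
Proof.
  intros [[u v] w]; unfold Omega; simpl; intros [H1 [H2 H3]].
  unfold Pc, Pf1, Pf2; simpl. pose proof sqrt6_nz.
  field; repeat split; auto; lra.
Qed.

Lemma Pc_skew a b p i j : Pc a b p i j = - Pc a b p j i.
Proof. unfold Pc, Pf1, Pf2; destruct i, j; simpl; ring. Qed.

Lemma Pc_T a b p : Omega p -> forall i j k, Tc (Pc a b) p i j k = 0.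
Proof.
  intros Hp i j k. unfold Tc, sum3.
  rewrite !(fun l j k => pd_ev (fun q => Pc a b q j k) (ecomb a b j k) l p (Pc_ev a b j k) Hp).
  pose proof sqrt6_nz.
  destruct p as [[u v] w]; unfold Omega in Hp; simpl in Hp; destruct Hp as [H1 [H2 H3]].
  assert (u - v <> 0) by lra. assert (v - w <> 0) by lra. assert (w - u <> 0) by lra.
  unfold Pc, Pf1, Pf2.
  destruct i, j, k; simpl; field; auto.
Qed.

Lemma Pc_poisson a b : Poisson_on Omega (Pc a b).
Proof.
  apply jacobi_generic.
  - intros i j; apply (smooth_ev _ (ecomb a b i j)); apply Pc_ev.
  - intros; apply Pc_skew.
  - apply Pc_T.
Qed.

Definition eS := Add (Var X1) (Add (Var X2) (Mul (Cst (-2)) (Var X3))).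
Definition eDf := Add (Var X1) (Mul (Cst (-1)) (Var X2)).
Definition eHf := Mul (Mul (Cst (1 / (6 * sqrt 6))) eS) (Add (Mul eS eS) (Mul (Cst (-9)) (Mul eDf eDf))).
Definition eH1 := Add (Add (Var X1) (Var X2)) (Var X3).

Lemma Hf_ev : forall q, Omega q -> Hf q = ev eHf q.
Proof.
  intros [[u v] w] _; unfold Hf; simpl. pose proof sqrt6_nz. field; auto.
Qed.
Lemma H1_ev : forall q, Omega q -> H1 q = ev eH1 q.
Proof. intros; reflexivity. Qed.

Theorem mainTheorem5 :
  Poisson_on Omega Pf1 /\ Poisson_on Omega Pf2 /\ compatible_on Omega Pf1 Pf2 /\
  (forall p : pt, Omega p -> forall i : ix,
     Ufield p i = PgradH Pf1 Hf p i /\ Ufield p i = PgradH Pf2 H1 p i).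
Proof.
  split; [|split; [|split]].
  - replace Pf1 with (Pc 1 0) at 1. apply Pc_poisson.
    unfold Pc; do 3 (apply functional_extensionality; intro); ring.
  - replace Pf2 with (Pc 0 1) at 1. apply Pc_poisson.
    unfold Pc; do 3 (apply functional_extensionality; intro); ring.
  - intros a b; apply (Pc_poisson a b).
  - intros p Hp i. unfold PgradH, sum3.
    rewrite !(fun l => pd_ev Hf eHf l p Hf_ev Hp).
    rewrite !(fun l => pd_ev H1 eH1 l p H1_ev Hp).
    pose proof sqrt6_nz.
    destruct p as [[u v] w]; unfold Omega in Hp; simpl in Hp; destruct Hp as [H1' [H2 H3]].
    assert (u - v <> 0) by lra. assert (v - w <> 0) by lra. assert (w - u <> 0) by lra.
    assert (u - w <> 0) by lra. assert (v - u <> 0) by lra. assert (w - v <> 0) by lra.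
    assert (Hs : sqrt 6 * sqrt 6 = 6) by (apply sqrt_sqrt; lra).
    unfold Ufield, Pf1, Pf2, eHf, eS, eDf; destruct i; simpl; split; field [Hs]; auto.
Qed.
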